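(* Let $\lambda\in\mathbb{R}$ and $f(x)=\lfloor \lambda x\rfloor$ for $x\in\mathbb{R}$. Let $\mathrm{Fix}(f)=\{x\in\mathbb{R}: f(x)=x\}$. Then: 1) If $\lambda\le 0$, then $\mathrm{Fix}(f)=\{0\}$. 2) If $\frac{m-1}{m}<\lambda\le\frac{m}{m+1}$ for some $m\in\mathbb{N}=\{1,2,\dots\}$, then $\mathrm{Fix}(f)=\{0,-1,-2,\dots,-m\}$. 3) If $\lambda=1$, then $\mathrm{Fix}(f)=\mathbb{Z}$. 4) If $\frac{m+1}{m}\le\lambda<\frac{m}{m-1}$ for some $m\in\mathbb{N}$ (for $m=1$ this condition is read as $2\le\lambda<+\infty$), then $\mathrm{Fix}(f)=\{0,1,2,\dots,m-1\}$.
   Context: $\lfloor x\rfloor=\max\{m\in\mathbb{Z}: m\le x\}$ denotes the floor function. Note that the intervals $\left(\frac{m-1}{m},\frac{m}{m+1}\right]$, $m\in\mathbb{N}$, partition $(0,1)$, and the intervals $\left[\frac{m+1}{m},\frac{m}{m-1}\right)$, $m\in\mathbb{N}$ (with the $m=1$ interval being $[2,+\infty)$), partition $(1,+\infty)$. *)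

(* Defs.v *)
From Stdlib Require Import Reals ZArith.
Open Scope R_scope.

(* floor x = max {m in Z : m <= x}.  In Stdlib, [up x] is the unique integer
   with x < IZR (up x) <= x + 1, so up x - 1 is the floor. *)
Definition floorR (x : R) : Z := (up x - 1)%Z.

Definition f (lam x : R) : R := IZR (floorR (lam * x)).

Definition Fix (lam : R) (x : R) : Prop := f lam x = x.

(* Main.v *)
Require Import Defs.
From Stdlib Require Import Reals ZArith Lra Lia Psatz.
Open Scope R_scope.

Lemma fix_char lam x : Fix lam x <-> exists n:Z, x = IZR n /\ IZR n <= lam * IZR n < IZR n + 1.
Proof.
  unfold Fix, Defs.f, floorR. split.
  - intro H. exists (up (lam*x) - 1)%Z.
    destruct (archimed (lam*x)) as [H1 H2].
    assert (B: IZR (up (lam * x) - 1) <= lam*x < IZR (up (lam * x) - 1) + 1)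
      by (rewrite minus_IZR; lra).
    rewrite H in B |- *. lra.
  - intros [n [-> Hn]]. f_equal.
    rewrite <- (tech_up (lam*IZR n) (n+1)); [lia | rewrite plus_IZR; lra | rewrite plus_IZR; lra].
Qed.

Lemma Zcases (n : Z) : IZR n <= -1 \/ n = 0%Z \/ 1 <= IZR n.
Proof.
  destruct (Z_lt_le_dec n 0).
  - left. apply IZR_le. lia.
  - destruct (Z.eq_dec n 0); [right; left; auto | right; right; apply IZR_le; lia].
Qed.

Lemma nat_of_negZ (n : Z) : (n <= 0)%Z -> IZR n = - INR (Z.to_nat (- n)).
Proof.
  intro H. rewrite INR_IZR_INZ, Z2Nat.id by lia. rewrite opp_IZR. lra.
Qed.

Lemma nat_of_posZ (n : Z) : (0 <= n)%Z -> IZR n = INR (Z.to_nat n).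
Proof.
  intro H. rewrite INR_IZR_INZ, Z2Nat.id by lia. reflexivity.
Qed.

Lemma nat_gt (k m : nat) : (m < k)%nat -> INR m + 1 <= INR k.
Proof. intro H. rewrite <- S_INR. apply le_INR. lia. Qed.

Theorem lemma1 (lam : R) :
  (lam <= 0 -> forall x : R, Fix lam x <-> x = 0)
  /\ (forall m : nat, (1 <= m)%nat ->
        (INR m - 1) / INR m < lam <= INR m / (INR m + 1) ->
        forall x : R, Fix lam x <-> exists k : nat, (k <= m)%nat /\ x = - INR k)
  /\ (lam = 1 -> forall x : R, Fix lam x <-> exists z : Z, x = IZR z)
  /\ (forall m : nat, (1 <= m)%nat ->
        (INR m + 1) / INR m <= lam /\ (m = 1%nat \/ lam < INR m / (INR m - 1)) ->
        forall x : R, Fix lam x <-> exists k : nat, (k < m)%nat /\ x = INR k).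
Proof.
  split; [|split; [|split]].
  - intros Hl x. rewrite fix_char. split.
    + intros [n [-> Hn]]. destruct (Zcases n) as [H|[H|H]].
      * nra.
      * subst; reflexivity.
      * nra.
    + intros ->. exists 0%Z. split; [reflexivity|]. lra.
  - intros m Hm1 [Ha Hb] x.
    assert (Hm : 1 <= INR m) by (apply (le_INR 1); auto).
    assert (Ha' : INR m - 1 < lam * INR m).
    { replace (INR m - 1) with ((INR m - 1)/INR m * INR m) by (field; lra).
      apply Rmult_lt_compat_r; lra. }
    assert (Hb' : lam * (INR m + 1) <= INR m).
    { replace (INR m) with (INR m/(INR m + 1) * (INR m + 1)) at 2 by (field; lra).
      apply Rmult_le_compat_r; lra. }
    rewrite fix_char. split.
    + intros [n [-> Hn]]. destruct (Zcases n) as [H|[H|H]].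
      * assert (Hn0 : (n <= 0)%Z) by (apply le_IZR; lra).
        exists (Z.to_nat (-n)). split; [| apply nat_of_negZ; auto].
        destruct (le_lt_dec (Z.to_nat (-n)) m) as [l|l]; auto.
        exfalso. apply nat_gt in l. rewrite (nat_of_negZ n Hn0) in Hn.
        set (k := INR (Z.to_nat (- n))) in *. nra.
      * subst. exists 0%nat. split; [lia|simpl; lra].
      * nra.
    + intros [k [Hk ->]]. exists (- Z.of_nat k)%Z.
      rewrite opp_IZR, <- INR_IZR_INZ. split; [reflexivity|].
      assert (Hk' : INR k <= INR m) by (apply le_INR; auto).
      destruct k as [|k].
      * simpl. lra.
      * assert (1 <= INR (S k)) by (apply (le_INR 1); lia).
        set (kk := INR (S k)) in *. split; nra.
  - intros -> x. rewrite fix_char. split.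
    + intros [n [-> _]]. eauto.
    + intros [z ->]. exists z. split; [reflexivity|lra].
  - intros m Hm1 [Ha Hb] x.
    assert (Hm : 1 <= INR m) by (apply (le_INR 1); auto).
    assert (Ha' : INR m + 1 <= lam * INR m).
    { replace (INR m + 1) with ((INR m + 1)/INR m * INR m) by (field; lra).
      apply Rmult_le_compat_r; lra. }
    rewrite fix_char. split.
    + intros [n [-> Hn]]. destruct (Zcases n) as [H|[H|H]].
      * nra.
      * subst. exists 0%nat. split; [lia|simpl; lra].
      * assert (Hn0 : (0 <= n)%Z) by (apply le_IZR; lra).
        exists (Z.to_nat n). split; [| apply nat_of_posZ; auto].
        destruct (le_lt_dec m (Z.to_nat n)) as [l|l]; auto.
        exfalso. apply le_INR in l. rewrite (nat_of_posZ n Hn0) in Hn.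
        set (k := INR (Z.to_nat n)) in *. nra.
    + intros [k [Hk ->]]. exists (Z.of_nat k).
      rewrite <- INR_IZR_INZ. split; [reflexivity|].
      destruct k as [|k].
      * simpl. lra.
      * assert (1 <= INR (S k)) by (apply (le_INR 1); lia).
        destruct Hb as [Hb|Hb]; [lia|].
        assert (Hm2 : 2 <= INR m) by (apply (le_INR 2); lia).
        assert (Hb' : lam * (INR m - 1) < INR m).
        { replace (INR m) with (INR m/(INR m - 1) * (INR m - 1)) at 2 by (field; lra).
          apply Rmult_lt_compat_r; lra. }
        assert (Hk' : INR (S k) + 1 <= INR m) by (apply nat_gt; auto).
        set (kk := INR (S k)) in *. split; nra.
Qed.
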